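(* Let $a\in\mathbb{C}$, let $v=\{v_n\}_{n=1}^\infty\in\ell^1(\mathbb{N})$ be complex and $V=\mathrm{diag}(v_1,v_2,\dots)$. Then \[ \sigma_{\mathrm p}(J_a+V)\subset\{\pm2\}\cup\Big\{k+k^{-1}\ \Big|\ 0<|k|<1,\ |k^{-1}-k|\,|1-ak|\le\big(|1-ak|+|k-a|\big)\|v\|_{\ell^1}\Big\}. \]
   Context: $\mathbb{N}=\{1,2,\dots\}$. For $a\in\mathbb{C}$, $J_a$ is the operator on $\ell^2(\mathbb{N})$ with $(J_a\psi)_1=a\psi_1+\psi_2$ and $(J_a\psi)_n=\psi_{n-1}+\psi_{n+1}$ for $n\ge2$. $\sigma_{\mathrm p}$ denotes the set of eigenvalues. *)

(* Defs.v *)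
From Stdlib Require Import Reals.
From Coquelicot Require Import Coquelicot.
Open Scope R_scope.

(* Sequences on N = {1,2,...} are represented as functions [nat -> C]
   with 0-based indexing: [psi 0] is psi_1, [psi n] is psi_{n+1}. *)

Definition in_l2 (psi : nat -> C) : Prop := ex_series (fun n => (Cmod (psi n))^2).

Definition in_l1 (v : nat -> C) : Prop := ex_series (fun n => Cmod (v n)).
Definition l1norm (v : nat -> C) : R := Series (fun n => Cmod (v n)).

(* ((J_a + V) psi)_n, 0-based:
   ((J_a+V)psi)_1 = a psi_1 + psi_2 + v_1 psi_1,
   ((J_a+V)psi)_n = psi_{n-1} + psi_{n+1} + v_n psi_n  for n >= 2. *)
Definition JaV (a : C) (v : nat -> C) (psi : nat -> C) (n : nat) : C :=
  match n with
  | O => Cplus (Cplus (Cmult a (psi O)) (psi 1%nat)) (Cmult (v O) (psi O))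
  | S m => Cplus (Cplus (psi m) (psi (S (S m)))) (Cmult (v (S m)) (psi (S m)))
  end.

(* lam is an eigenvalue of J_a + V on l^2(N) (V is bounded as v in l^1, so
   J_a + V is a bounded operator defined on all of l^2). *)
Definition eigenvalue_JaV (a : C) (v : nat -> C) (lam : C) : Prop :=
  exists psi : nat -> C,
    in_l2 psi /\ (exists n, psi n <> RtoC 0) /\
    forall n, JaV a v psi n = Cmult lam (psi n).

(* Main.v *)
Require Import Defs.
From Stdlib Require Import Reals Lra Lia.
From Coquelicot Require Import Coquelicot.
Open Scope R_scope.

Fixpoint sumr (g : nat -> R) (a L : nat) : R :=
  match L with O => 0 | S L' => g a + sumr g (S a) L' end.

Lemma sumr_split g L1 : forall a L2, sumr g a (L1 + L2) = sumr g a L1 + sumr g (a + L1) L2.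
Proof.
  induction L1 as [|L1 IH]; intros a L2; simpl.
  - rewrite Nat.add_0_r; ring.
  - rewrite IH. replace (S a + L1)%nat with (a + S L1)%nat by lia. ring.
Qed.

Lemma sumr_nonneg g a L : (forall j, 0 <= g j) -> 0 <= sumr g a L.
Proof.
  intro H; revert a; induction L; intros a; simpl; [lra|].
  specialize (H a); specialize (IHL (S a)); lra.
Qed.

Lemma sumr_le g h a L : (forall j, g j <= h j) -> sumr g a L <= sumr h a L.
Proof.
  intro H; revert a; induction L; intros a; simpl; [lra|].
  specialize (H a); specialize (IHL (S a)); lra.
Qed.

Lemma sumr_scal c g a L : sumr (fun j => c * g j) a L = c * sumr g a L.
Proof. revert a; induction L; intros a; simpl; [ring|]. rewrite IHL; ring. Qed.

Lemma sumr_shift g a L : sumr g (S a) L = sumr (fun j => g (S j)) a L.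
Proof. revert a; induction L; intros a; simpl; [ring|]. rewrite IHL; ring. Qed.

Lemma sumr_sum_f g n : sumr g 0 (S n) = sum_f_R0 g n.
Proof.
  induction n. simpl; ring.
  replace (S (S n)) with (S n + 1)%nat by lia. rewrite sumr_split, IHn. simpl.
  replace (0 + S n)%nat with (S n) by lia. ring.
Qed.

Lemma backward (c : C) (x F : nat -> C) :
  Cmod c <= 1 ->
  (forall n, x n = Cmult c (Cminus (x (S n)) (F (S n)))) ->
  forall L n, Cmod (x n) <= Cmod c ^ L * Cmod (x (n + L)%nat)
                            + sumr (fun j => Cmod (F j)) (S n) L.
Proof.
  intros Hc Hx L. induction L as [|L IH]; intros n.
  - simpl. rewrite Nat.add_0_r. lra.
  - rewrite Hx. rewrite Cmod_mult. unfold Cminus.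
    pose proof (Cmod_triangle (x (S n)) (Copp (F (S n)))) as T.
    rewrite Cmod_opp in T.
    specialize (IH (S n)). replace (S n + L)%nat with (n + S L)%nat in IH by lia.
    simpl sumr.
    pose proof (Cmod_ge_0 c). pose proof (Cmod_ge_0 (F (S n))).
    assert (0 <= sumr (fun j => Cmod (F j)) (S (S n)) L) by (apply sumr_nonneg; intros; apply Cmod_ge_0).
    simpl pow.
    assert (Cmod c * Cmod (x (S n) + Copp (F (S n)))%C <= Cmod c * (Cmod (x (S n)) + Cmod (F (S n)))) by (apply Rmult_le_compat_l; lra).
    assert (Cmod c * Cmod (x (S n)) <= Cmod c * (Cmod c ^ L * Cmod (x (n + S L)%nat) + sumr (fun j => Cmod (F j)) (S (S n)) L)) by (apply Rmult_le_compat_l; lra).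
    nra.
Qed.

Lemma forward (c : C) (x F : nat -> C) :
  Cmod c <= 1 ->
  (forall n, x (S n) = Cplus (Cmult c (x n)) (F (S n))) ->
  forall n, Cmod (x n) <= Cmod c ^ n * Cmod (x O) + sumr (fun j => Cmod (F j)) 1 n.
Proof.
  intros Hc Hx n. induction n.
  - simpl. lra.
  - rewrite Hx. pose proof (Cmod_triangle (Cmult c (x n)) (F (S n))) as T.
    rewrite Cmod_mult in T.
    replace (S n) with (n + 1)%nat at 3 by lia. rewrite sumr_split. simpl sumr.
    replace (1 + n)%nat with (S n) by lia.
    pose proof (Cmod_ge_0 c).
    assert (0 <= sumr (fun j => Cmod (F j)) 1 n) by (apply sumr_nonneg; intros; apply Cmod_ge_0).
    assert (Cmod c * Cmod (x n) <= Cmod c * (Cmod c ^ n * Cmod (x 0%nat) + sumr (fun j => Cmod (F j)) 1 n)) by (apply Rmult_le_compat_l; lra).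
    simpl pow. nra.
Qed.
Lemma decay psi : in_l2 psi -> forall e, 0 < e -> exists N, forall n, (n >= N)%nat -> Cmod (psi n) < e.
Proof.
  intros H e He. apply ex_series_lim_0, is_lim_seq_spec in H.
  destruct (H (mkposreal (e*e) ltac:(nra))) as [N HN].
  exists N. intros n Hn. specialize (HN n Hn). simpl in HN.
  rewrite Rminus_0_r in HN. pose proof (Cmod_ge_0 (psi n)).
  rewrite Rabs_pos_eq in HN by nra. nra.
Qed.

Lemma finmax (f : nat -> R) N0 D : exists n0, (N0 <= n0 <= N0 + D)%nat /\
   forall j, (N0 <= j <= N0 + D)%nat -> f j <= f n0.
Proof.
  induction D.
  - exists N0. split; [lia|]. intros j Hj. replace j with N0 by lia. lra.
  - destruct IHD as [n0 [H1 H2]].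
    destruct (Rle_lt_dec (f (N0 + S D)%nat) (f n0)).
    + exists n0. split; [lia|]. intros j Hj.
      destruct (Nat.eq_dec j (N0 + S D)). subst; auto. apply H2; lia.
    + exists (N0 + S D)%nat. split; [lia|]. intros j Hj.
      destruct (Nat.eq_dec j (N0 + S D)). subst; lra. specialize (H2 j ltac:(lia)). lra.
Qed.

Lemma maxlem psi N0 m : in_l2 psi -> (m >= N0)%nat -> psi m <> RtoC 0 ->
  exists n0, (n0 >= N0)%nat /\ 0 < Cmod (psi n0) /\ forall j, (j >= N0)%nat -> Cmod (psi j) <= Cmod (psi n0).
Proof.
  intros Hl Hm Hz. assert (He : 0 < Cmod (psi m)) by (apply Cmod_gt_0; auto).
  destruct (decay psi Hl _ He) as [N1 HN1].
  destruct (finmax (fun j => Cmod (psi j)) N0 (N1 + m)) as [n0 [H1 H2]].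
  exists n0. split; [lia|].
  assert (Cmod (psi m) <= Cmod (psi n0)) by (apply H2; lia).
  split; [lra|]. intros j Hj.
  destruct (Compare_dec.le_lt_dec j (N0 + (N1 + m))). apply H2; lia.
  specialize (HN1 j ltac:(lia)). lra.
Qed.

Lemma partial_le (g : nat -> R) : (forall j, 0 <= g j) -> ex_series g -> forall n, sum_f_R0 g n <= Series g.
Proof.
  intros Hg Hs n. apply Series_correct, is_series_Reals in Hs.
  destruct (Rle_lt_dec (sum_f_R0 g n) (Series g)) as [|Hlt]; auto.
  destruct (Hs (sum_f_R0 g n - Series g) ltac:(lra)) as [N HN].
  specialize (HN (n + N)%nat ltac:(lia)).
  assert (sum_f_R0 g n <= sum_f_R0 g (n + N)).
  { clear HN. induction N. rewrite Nat.add_0_r; lra.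
    replace (n + S N)%nat with (S (n + N)) by lia. simpl. specialize (Hg (S (n+N))). lra. }
  unfold Rdist in HN. rewrite Rabs_pos_eq in HN by lra. lra.
Qed.
Lemma csqrt_ex (z : C) : exists w : C, Cmult w w = z.
Proof.
  destruct z as [x y].
  set (r := sqrt (x*x + y*y)).
  assert (Hr : r * r = x*x + y*y) by (apply sqrt_sqrt; nra).
  assert (Hr0 : 0 <= r) by apply sqrt_pos.
  assert (Hrx : - r <= x <= r) by (split; nra).
  set (s := if Rle_dec 0 y then 1 else -1).
  set (p := sqrt ((r + x)/2)). set (q := sqrt ((r - x)/2)).
  assert (Hp : p * p = (r+x)/2) by (apply sqrt_sqrt; lra).
  assert (Hq : q * q = (r-x)/2) by (apply sqrt_sqrt; lra).
  assert (Hpq : p * q = Rabs y / 2).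
  { unfold p, q. rewrite <- sqrt_mult by lra.
    replace ((r + x) / 2 * ((r - x) / 2)) with (Rsqr (Rabs y / 2)).
    apply sqrt_Rsqr. pose proof (Rabs_pos y); lra.
    unfold Rsqr. replace (Rabs y / 2 * (Rabs y / 2)) with ((Rabs y * Rabs y)/4) by field.
    rewrite <- Rabs_mult, Rabs_pos_eq by nra. nra. }
  exists (p, s * q). unfold Cmult; simpl. f_equal.
  - unfold s; destruct (Rle_dec 0 y); nra.
  - unfold s; destruct (Rle_dec 0 y).
    + rewrite Rabs_pos_eq in Hpq by lra. nra.
    + rewrite Rabs_left in Hpq by lra. nra.
Qed.

Lemma tail (g : nat -> R) : ex_series g ->
  forall d, 0 < d -> exists N, forall a L, (a >= S N)%nat -> sumr g a L < d.
Proof.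
  intros Hs d Hd. apply Series_correct, is_series_Reals in Hs.
  destruct (Hs (d/2) ltac:(lra)) as [N HN]. exists N. intros a L Ha.
  destruct a as [|a']; [lia|].
  pose proof (sumr_split g (S a') 0 L) as E. simpl (0 + S a')%nat in E.
  replace (S a' + L)%nat with (S (a' + L)) in E by lia.
  rewrite !sumr_sum_f in E.
  pose proof (HN a' ltac:(lia)). pose proof (HN (a' + L)%nat ltac:(lia)).
  unfold Rdist in *. apply Rabs_def2 in H. apply Rabs_def2 in H0. lra.
Qed.

Definition qq (a : C) (psi : nat -> C) (n : nat) : C :=
  match n with O => Cmult a (psi O) | S m => psi m end.
Definition FF (v psi : nat -> C) (n : nat) : C :=
  match n with O => RtoC 0 | S m => Copp (Cmult (v m) (psi m)) end.

Lemma qq_eq a v psi lam : (forall n, JaV a v psi n = Cmult lam (psi n)) ->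
  forall n, Cplus (qq a psi n) (qq a psi (S (S n))) = Cplus (Cmult lam (qq a psi (S n))) (FF v psi (S n)).
Proof.
  intros H n. destruct n as [|m]; simpl.
  - rewrite <- (H O). unfold JaV. ring.
  - rewrite <- (H (S m)). unfold JaV. ring.
Qed.

Definition uu a psi k n := Cminus (qq a psi (S n)) (Cmult k (qq a psi n)).

Lemma u_back a v psi lam k : k <> RtoC 0 -> lam = Cplus k (Cinv k) ->
  (forall n, JaV a v psi n = Cmult lam (psi n)) ->
  forall n, uu a psi k n = Cmult k (Cminus (uu a psi k (S n)) (FF v psi (S n))).
Proof.
  intros Hk Hl H n. unfold uu.
  pose proof (qq_eq a v psi lam H n) as E.
  replace (qq a psi (S (S n))) with (Cminus (Cplus (Cmult lam (qq a psi (S n))) (FF v psi (S n))) (qq a psi n)) by (rewrite <- E; ring).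
  subst lam. field. auto.
Qed.

Lemma w_fwd a v psi lam k : k <> RtoC 0 -> lam = Cplus k (Cinv k) ->
  (forall n, JaV a v psi n = Cmult lam (psi n)) ->
  forall n, uu a psi (Cinv k) (S n) = Cplus (Cmult k (uu a psi (Cinv k) n)) (FF v psi (S n)).
Proof.
  intros Hk Hl H n. unfold uu.
  pose proof (qq_eq a v psi lam H n) as E.
  replace (qq a psi (S (S n))) with (Cminus (Cplus (Cmult lam (qq a psi (S n))) (FF v psi (S n))) (qq a psi n)) by (rewrite <- E; ring).
  subst lam. field. auto.
Qed.

Lemma w_back a v psi lam k : k <> RtoC 0 -> lam = Cplus k (Cinv k) ->
  (forall n, JaV a v psi n = Cmult lam (psi n)) ->
  forall n, uu a psi (Cinv k) n = Cmult (Cinv k) (Cminus (uu a psi (Cinv k) (S n)) (FF v psi (S n))).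
Proof.
  intros Hk Hl H n. rewrite (w_fwd a v psi lam k Hk Hl H n). field. auto.
Qed.

Lemma uw_diff a psi k n : k <> RtoC 0 ->
  Cmult (Cminus (Cinv k) k) (qq a psi n) = Cminus (uu a psi k n) (uu a psi (Cinv k) n).
Proof. intros. unfold uu. field. auto. Qed.

Lemma limit_arg X Y c r : 0 <= r < 1 -> 0 <= c -> (forall L, X <= Y + c * r ^ L) -> X <= Y.
Proof.
  intros Hr Hc H. destruct (Rle_lt_dec X Y) as [|Hlt]; auto.
  assert (Rabs r < 1) by (rewrite Rabs_pos_eq; lra).
  destruct (pow_lt_1_zero r H0 ((X - Y)/(c+1)) ltac:(apply Rdiv_lt_0_compat; lra)) as [N HN].
  specialize (HN N (Nat.le_refl N)). specialize (H N).
  rewrite Rabs_pos_eq in HN by (apply pow_le; lra).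
  assert (c * r ^ N <= (c+1) * r^N) by (pose proof (pow_le r N ltac:(lra)); nra).
  assert ((c+1) * r ^ N < X - Y).
  { apply (Rmult_lt_compat_l (c+1)) in HN; [|lra]. field_simplify in HN; lra. }
  lra.
Qed.

Lemma pow_le_one r n : 0 <= r <= 1 -> r ^ n <= 1.
Proof. intros H; induction n; simpl; [lra|]. pose proof (pow_le r n ltac:(lra)). nra. Qed.

Lemma V_nonneg v : in_l1 v -> 0 <= l1norm v.
Proof.
  intro H. pose proof (partial_le (fun n => Cmod (v n)) (fun j => Cmod_ge_0 _) H 0).
  simpl in H0. pose proof (Cmod_ge_0 (v O)). unfold l1norm; lra.
Qed.

Lemma sumr_le_V v : in_l1 v -> forall N, sumr (fun j => Cmod (v j)) 0 N <= l1norm v.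
Proof.
  intros H [|N]. simpl. apply V_nonneg; auto.
  rewrite sumr_sum_f. apply partial_le; auto. intros; apply Cmod_ge_0.
Qed.

Lemma sumF_bound v psi M a L : (forall j, (j >= a)%nat -> Cmod (psi j) <= M) ->
  sumr (fun j => Cmod (FF v psi j)) (S a) L <= M * sumr (fun j => Cmod (v j)) a L.
Proof.
  intros HM. rewrite sumr_shift, <- sumr_scal.
  revert a HM. induction L; intros a HM; simpl; [lra|].
  rewrite Cmod_opp, Cmod_mult.
  specialize (IHL (S a) ltac:(intros; apply HM; lia)).
  pose proof (HM a (Nat.le_refl a)). pose proof (Cmod_ge_0 (v a)). simpl in IHL. nra.
Qed.

Lemma case_in a v psi lam k : in_l1 v -> in_l2 psi -> (exists n, psi n <> RtoC 0) ->
  (forall n, JaV a v psi n = Cmult lam (psi n)) -> k <> RtoC 0 -> Cmod k < 1 ->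
  lam = Cplus k (Cinv k) ->
  Cmod (Cminus (Cinv k) k) * Cmod (Cminus (RtoC 1) (Cmult a k))
      <= (Cmod (Cminus (RtoC 1) (Cmult a k)) + Cmod (Cminus k a)) * l1norm v.
Proof.
  intros Hv Hpsi [m Hm] H Hk Hk1 Hl.
  set (K := Cmod (Cminus (Cinv k) k)). set (P := Cmod (Cminus (RtoC 1) (Cmult a k))).
  set (Q := Cmod (Cminus k a)). set (V := l1norm v). set (r := Cmod k).
  assert (HV : 0 <= V) by (apply V_nonneg; auto).
  assert (HK : 0 <= K) by apply Cmod_ge_0. assert (HP : 0 <= P) by apply Cmod_ge_0.
  assert (HQ : 0 <= Q) by apply Cmod_ge_0. assert (Hr : 0 <= r) by apply Cmod_ge_0.
  destruct (maxlem psi 0 m Hpsi ltac:(lia) Hm) as [n0 [_ [HM0 HM]]].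
  set (M := Cmod (psi n0)) in *.
  assert (HMa : forall j, Cmod (psi j) <= M) by (intros; apply HM; lia).
  assert (Hq : forall j, Cmod (qq a psi j) <= (1 + Cmod a) * M).
  { intros [|j]; simpl. rewrite Cmod_mult. pose proof (HMa O). pose proof (Cmod_ge_0 a). nra.
    pose proof (HMa j). pose proof (Cmod_ge_0 a). nra. }
  set (B := 2 * (1 + Cmod a) * M).
  assert (HB : forall j, Cmod (uu a psi k j) <= B).
  { intros j. unfold uu, Cminus. eapply Rle_trans. apply Cmod_triangle.
    rewrite Cmod_opp, Cmod_mult. pose proof (Hq (S j)). pose proof (Hq j).
    pose proof (Cmod_ge_0 (qq a psi j)). fold r. assert (r * Cmod (qq a psi j) <= 1 * Cmod (qq a psi j)) by (apply Rmult_le_compat_r; [apply Cmod_ge_0|unfold r in *; lra]). unfold B. nra. }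
  assert (HB0 : 0 <= B) by (unfold B; pose proof (Cmod_ge_0 a); nra).
  assert (Hc1 : Cmod k <= 1) by lra.
  pose proof (backward k (uu a psi k) (FF v psi) Hc1 (u_back a v psi lam k Hk Hl H)) as BU.
  pose proof (forward k (uu a psi (Cinv k)) (FF v psi) Hc1 (w_fwd a v psi lam k Hk Hl H)) as FW.
  assert (Hsum : forall N, sumr (fun j => Cmod (FF v psi j)) 1 N <= M * V).
  { intros N. eapply Rle_trans. apply (sumF_bound v psi M 0 N). intros; apply HMa.
    apply Rmult_le_compat_l. lra. apply sumr_le_V; auto. }
  assert (Hw0 : P * (r * Cmod (uu a psi (Cinv k) 0)) = Q * Cmod (uu a psi k 0)).
  { unfold P, Q, r. rewrite <- !Cmod_mult. f_equal. unfold uu; simpl. field. auto. }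
  apply (Rmult_le_reg_r M); auto.
  apply (limit_arg _ _ ((P + Q) * B) r). split; auto. nra.
  intros L.
  pose proof (uw_diff a psi k (S n0) Hk) as D. simpl in D.
  apply (f_equal Cmod) in D. rewrite Cmod_mult in D. fold K M in D.
  assert (T : K * M <= Cmod (uu a psi k (S n0)) + Cmod (uu a psi (Cinv k) (S n0))).
  { rewrite D. unfold Cminus. eapply Rle_trans. apply Cmod_triangle. rewrite Cmod_opp. lra. }
  pose proof (BU L (S n0)) as U1. fold r in U1.
  pose proof (FW (S n0)) as W1. fold r in W1.
  pose proof (BU L O) as U0. fold r in U0. simpl (0 + L)%nat in U0.
  pose proof (Hsum L) as S0.
  pose proof (sumr_split (fun j => Cmod (FF v psi j)) (S n0) 1 L) as SP.
  simpl (1 + S n0)%nat in SP. pose proof (Hsum (S n0 + L)%nat) as S1.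
  pose proof (HB (S n0 + L)%nat). pose proof (HB L).
  assert (0 <= r ^ L) by (apply pow_le; auto).
  assert (r ^ L * Cmod (uu a psi k (S n0 + L)) <= r ^ L * B) by (apply Rmult_le_compat_l; auto).
  assert (r ^ L * Cmod (uu a psi k L) <= r ^ L * B) by (apply Rmult_le_compat_l; auto).
  assert (HrS : r ^ S n0 * Cmod (uu a psi (Cinv k) 0) <= r * Cmod (uu a psi (Cinv k) 0)).
  { simpl. pose proof (pow_le r n0 Hr). assert (r ^ n0 <= 1) by (apply pow_le_one; split; [exact Hr | unfold r in *; lra]).
    pose proof (Cmod_ge_0 (uu a psi (Cinv k) 0)).
    assert (r ^ n0 * Cmod (uu a psi (Cinv k) 0) <= 1 * Cmod (uu a psi (Cinv k) 0)) by (apply Rmult_le_compat_r; lra).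
    rewrite Rmult_assoc. apply Rmult_le_compat_l; lra. }
  assert (E1 : K * M <= r ^ L * B + M * V + r * Cmod (uu a psi (Cinv k) 0)) by lra.
  assert (E2 : Q * Cmod (uu a psi k 0) <= Q * (r ^ L * B + M * V)) by (apply Rmult_le_compat_l; lra).
  assert (E3 : P * (K * M) <= P * (r ^ L * B + M * V + r * Cmod (uu a psi (Cinv k) 0))) by (apply Rmult_le_compat_l; lra).
  replace (K * P * M) with (P * (K * M)) by ring.
  replace ((P + Q) * V * M + (P + Q) * B * r ^ L) with (P * (r ^ L * B + M * V) + Q * (r ^ L * B + M * V)) by ring.
  nra.
Qed.

Lemma case_emb a v psi lam k : in_l1 v -> in_l2 psi -> (exists n, psi n <> RtoC 0) ->
  (forall n, JaV a v psi n = Cmult lam (psi n)) -> k <> RtoC 0 -> Cmod k = 1 ->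
  lam = Cplus k (Cinv k) -> Cminus (Cinv k) k <> RtoC 0 -> False.
Proof.
  intros Hv Hpsi [m0 Hm0] H Hk Hk1 Hl Hd.
  set (K := Cmod (Cminus (Cinv k) k)).
  assert (HK : 0 < K) by (apply Cmod_gt_0; auto).
  assert (Hki : Cmod (Cinv k) = 1) by (rewrite Cmod_inv, Hk1 by auto; lra).
  destruct (tail _ Hv (K/4) ltac:(lra)) as [N HN].
  assert (Hz : forall m, (m >= S N)%nat -> psi m = RtoC 0).
  { intros m Hm. destruct (Classical_Prop.classic (psi m = RtoC 0)) as [|Hnz]; auto. exfalso.
    destruct (maxlem psi (S N) m Hpsi Hm Hnz) as [n0 [Hn0 [HM0 HM]]].
    set (M := Cmod (psi n0)) in *.
    destruct (decay psi Hpsi (K * M / 8) ltac:(nra)) as [N2 HN2].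
    set (L := N2).
    pose proof (uw_diff a psi k (S n0) Hk) as D. simpl in D.
    apply (f_equal Cmod) in D. rewrite Cmod_mult in D. fold K M in D.
    assert (T : K * M <= Cmod (uu a psi k (S n0)) + Cmod (uu a psi (Cinv k) (S n0))).
    { rewrite D. unfold Cminus. eapply Rle_trans. apply Cmod_triangle. rewrite Cmod_opp. lra. }
    pose proof (backward k (uu a psi k) (FF v psi) ltac:(lra) (u_back a v psi lam k Hk Hl H) L (S n0)) as U1.
    pose proof (backward (Cinv k) (uu a psi (Cinv k)) (FF v psi) ltac:(lra) (w_back a v psi lam k Hk Hl H) L (S n0)) as W1.
    rewrite Hk1, pow1 in U1. rewrite Hki, pow1 in W1.
    pose proof (sumF_bound v psi M (S n0) L ltac:(intros; apply HM; lia)) as SB.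
    pose proof (HN (S n0) L ltac:(lia)) as TN.
    assert (HU : forall c, Cmod c = 1 -> Cmod (uu a psi c (S n0 + L)) < K * M / 4).
    { intros c Hc. unfold uu, Cminus. eapply Rle_lt_trans. apply Cmod_triangle.
      rewrite Cmod_opp, Cmod_mult, Hc. simpl qq.
      pose proof (HN2 (S (n0 + L)) ltac:(unfold L; lia)).
      pose proof (HN2 (n0 + L)%nat ltac:(unfold L; lia)).
      replace (S (n0 + L)) with (n0 + S L)%nat in * by lia. lra. }
    pose proof (HU k Hk1). pose proof (HU (Cinv k) Hki).
    assert (M * sumr (fun j => Cmod (v j)) (S n0) L <= M * (K/4)) by (apply Rmult_le_compat_l; lra).
    lra. }
  assert (Hq : forall t m, (m + t >= S (S N))%nat -> qq a psi m = RtoC 0).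
  { induction t; intros m Hm.
    - destruct m as [|m']; [lia|]. simpl. apply Hz. lia.
    - pose proof (IHt (S m) ltac:(lia)) as A1. pose proof (IHt (S (S m)) ltac:(lia)) as A2.
      pose proof (qq_eq a v psi lam H m) as E. rewrite A2 in E.
      simpl in A1. simpl FF in E. rewrite A1 in E.
      change (qq a psi (S m)) with (psi m) in E. rewrite A1 in E. transitivity (Cplus (qq a psi m) (RtoC 0)); [ring|]. rewrite E; ring. }
  apply Hm0. apply (Hq (S (S N)) (S m0)). lia.
Qed.

Lemma Cmult_eq0 x y : Cmult x y = RtoC 0 -> x = RtoC 0 \/ y = RtoC 0.
Proof.
  intro H. apply (f_equal Cmod) in H. rewrite Cmod_mult, Cmod_0 in H.
  destruct (Rmult_integral _ _ H); [left|right]; apply Cmod_eq_0; auto.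
Qed.

Theorem corollary3p5 (a : C) (v : nat -> C) (hv : in_l1 v) (lam : C) :
  eigenvalue_JaV a v lam ->
  lam = RtoC 2 \/ lam = RtoC (-2) \/
  exists k : C,
    0 < Cmod k < 1 /\
    lam = Cplus k (Cinv k) /\
    Cmod (Cminus (Cinv k) k) * Cmod (Cminus (RtoC 1) (Cmult a k))
      <= (Cmod (Cminus (RtoC 1) (Cmult a k)) + Cmod (Cminus k a)) * l1norm v.
Proof.
  intros [psi [Hl2 [Hnz Heq]]].
  destruct (Classical_Prop.classic (lam = RtoC 2)) as [|H2]; [left; auto|].
  destruct (Classical_Prop.classic (lam = RtoC (-2))) as [|H2']; [right; left; auto|].
  right; right.
  destruct (csqrt_ex (Cminus (Cmult lam lam) (RtoC 4))) as [w Hw].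
  set (k1 := Cdiv (Cplus lam w) (RtoC 2)). set (k2 := Cdiv (Cminus lam w) (RtoC 2)).
  assert (Htwo : RtoC 2 <> RtoC 0) by (intro E; apply (f_equal fst) in E; simpl in E; lra).
  assert (Hp : Cmult k1 k2 = RtoC 1).
  { unfold k1, k2. replace (RtoC 4) with (Cmult (RtoC 2) (RtoC 2)) in Hw.
    transitivity (Cdiv (Cminus (Cmult lam lam) (Cmult w w)) (Cmult (RtoC 2) (RtoC 2))).
    field; auto. rewrite Hw. field. auto.
    unfold Cmult, RtoC; simpl. f_equal; ring. }
  assert (Hs : Cplus k1 k2 = lam) by (unfold k1, k2; field; auto).
  assert (Hk1 : k1 <> RtoC 0) by (intro E; rewrite E in Hp; rewrite Cmult_0_l in Hp;
      apply (f_equal fst) in Hp; simpl in Hp; lra).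
  assert (Hk2 : k2 <> RtoC 0) by (intro E; rewrite E in Hp; rewrite Cmult_0_r in Hp;
      apply (f_equal fst) in Hp; simpl in Hp; lra).
  assert (Hi1 : Cinv k1 = k2) by (rewrite <- (Cmult_1_l (Cinv k1)), <- Hp; field; auto).
  assert (Hi2 : Cinv k2 = k1) by (rewrite <- (Cmult_1_l (Cinv k2)), <- Hp; field; auto).
  assert (Hm : Cmod k1 * Cmod k2 = 1) by (rewrite <- Cmod_mult, Hp, Cmod_1; auto).
  assert (P1 : 0 < Cmod k1) by (apply Cmod_gt_0; auto).
  assert (P2 : 0 < Cmod k2) by (apply Cmod_gt_0; auto).
  destruct (Rtotal_order (Cmod k1) 1) as [Hlt | [Heq1 | Hgt]].
  - exists k1. assert (L1 : lam = Cplus k1 (Cinv k1)) by (rewrite Hi1; auto).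
    split; [lra|]. split; auto. eapply case_in; eauto.
  - exfalso. assert (L1 : lam = Cplus k1 (Cinv k1)) by (rewrite Hi1; auto).
    apply (case_emb a v psi lam k1 hv Hl2 Hnz Heq Hk1 Heq1 L1).
    intro E. rewrite Hi1 in E.
    assert (Cmult (Cminus k1 (RtoC 1)) (Cplus k1 (RtoC 1)) = RtoC 0).
    { replace (Cmult (Cminus k1 (RtoC 1)) (Cplus k1 (RtoC 1))) with (Cminus (Cmult k1 k2) (RtoC 1) ) .
      rewrite Hp. ring.
      replace k2 with (Cplus (Cminus k2 k1) k1) by ring. rewrite E. ring. }
    assert (k2 = k1) by (replace k2 with (Cplus (Cminus k2 k1) k1) by ring; rewrite E; ring).
    destruct (Cmult_eq0 _ _ H) as [E1|E1].
    + apply H2. rewrite <- Hs, H0. replace k1 with (Cplus (Cminus k1 (RtoC 1)) (RtoC 1)) by ring.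
      rewrite E1. unfold Cplus, RtoC; simpl. f_equal; ring.
    + apply H2'. rewrite <- Hs, H0. replace k1 with (Cminus (Cplus k1 (RtoC 1)) (RtoC 1)) by ring.
      rewrite E1. unfold Cplus, Cminus, Copp, RtoC; simpl. f_equal; ring.
  - exists k2. assert (L2 : lam = Cplus k2 (Cinv k2)) by (rewrite Hi2, <- Hs; ring).
    assert (Cmod k2 < 1) by nra.
    split; [lra|]. split; auto. eapply case_in; eauto.
Qed.
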